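(* Let $p(z)=z^{d_1}+\sum_{j<d_1}a_jz^j$ and $q(z)=z^{d_2}+\sum_{j<d_2}b_jz^j$ in $\mathbb{C}[z]$ with $d_1,d_2\ge1$. Then there exist polynomials $r\in\mathbb{C}[z]$ and $R_1,R_2\in\mathbb{C}[x,y]$ such that $r(x-y)=R_1(x,y)p(x)+R_2(x,y)q(y)$; $\deg r=d_1d_2$ and the leading coefficient of $r$ is $1$; $\deg R_1<d_1d_2$ and $\deg R_2<d_1d_2$; the coefficients of $r$ lie in $\mathcal{T}(d_1+d_2,2^{d_1+d_2}(d_1d_2)!)$; and the coefficients of $R_1,R_2$ lie in $\mathcal{T}(\tilde d,4^{\tilde d}\tilde d!)$, where $\tilde d:=(d_1+1)(d_2+1)$.
   Context: Let $K:=\{\pm a_j:0\le j<d_1\}\cup\{\pm b_j:0\le j<d_2\}$. For $k,l\in\mathbb{N}_0$, $\mathcal{T}(k,l):=\{f\in\mathbb{C}: f=\sum_{j=1}^{l'}\prod_{i=1}^kx_{i,j}\text{ for some }x_{i,j}\in\{0,\pm1\}\cup K\text{ and }0\le l'\le l\}$, with empty sums equal to $0$ and empty products equal to $1$. *)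

(* Defs.v *)
(* complex numbers are R[i] (mathcomp-real-closed) over a
   realType R (any complete archimedean ordered field, i.e. the reals);
   bivariate polynomials are {mpoly C[2]} (multinomials), x = 'X_0, y = 'X_1. *)
From HB Require Import structures.
From mathcomp Require Import all_boot all_order all_algebra.
From mathcomp Require Import reals complex mpoly.
Set Implicit Arguments. Unset Strict Implicit. Unset Printing Implicit Defensive.
Import GRing.Theory Num.Theory.
Local Open Scope ring_scope.

Section Defs.
Variables (R : realType) (d1 d2 : nat) (a : 'I_d1 -> R[i]) (b : 'I_d2 -> R[i]).

Definition inK (x : R[i]) : Prop :=
  (exists j : 'I_d1, x = a j \/ x = - a j) \/
  (exists j : 'I_d2, x = b j \/ x = - b j).

Definition allowed (x : R[i]) : Prop :=
  x = 0 \/ x = 1 \/ x = -1 \/ inK x.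

Definition inT (k l : nat) (f : R[i]) : Prop :=
  exists l' : nat, (l' <= l)%N /\
    exists X : 'I_l' -> 'I_k -> R[i],
      (forall j i, allowed (X j i)) /\ f = \sum_(j < l') \prod_(i < k) X j i.

Definition pp : {poly R[i]} := 'X^d1 + \sum_(j < d1) a j *: 'X^j.
Definition qq : {poly R[i]} := 'X^d2 + \sum_(j < d2) b j *: 'X^j.

End Defs.

Definition peval2 (R : realType) (p : {poly R[i]}) (t : {mpoly R[i][2]})
  : {mpoly R[i][2]} := (map_poly (@mpolyC 2 _) p).[t].

(* Main.v *)
Require Import Defs.
From HB Require Import structures.
From mathcomp Require Import all_boot all_order all_algebra.
From mathcomp Require Import reals complex mpoly.
From mathcomp Require Import fingroup perm zify ring.
Import GRing.Theory Num.Theory.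
Local Open Scope ring_scope.

Module Helpers.
Set Implicit Arguments. Unset Strict Implicit. Unset Printing Implicit Defensive.
Import Order.TTheory GRing.Theory Num.Theory.

Section GS.
Variables (R : realType) (d1 d2 : nat) (a : 'I_d1 -> R[i]) (b : 'I_d2 -> R[i]).
Local Notation C := R[i].
Local Notation allw := (allowed a b).

Lemma allw0 : allw 0. Proof. by left. Qed.
Lemma allw1 : allw 1. Proof. by right; left. Qed.
Lemma allwN x : allw x -> allw (- x).
Proof.
case=> [->|[->|[->|[[j [->|->]]|[j [->|->]]]]]].
- by rewrite oppr0; left.
- by right; right; left.
- by rewrite opprK; right; left.
- by right; right; right; left; exists j; right.
- by rewrite opprK; right; right; right; left; exists j; left.
- by right; right; right; right; exists j; right.
- by rewrite opprK; right; right; right; right; exists j; left.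
Qed.
Lemma allw_sgn (s c : bool) x : allw x -> allw ((-1) ^+ s * (c%:R) * x).
Proof.
move=> h; case: c; last by rewrite mulr0 mul0r; apply: allw0.
case: s; rewrite /= ?expr1 ?expr0 mulr1 ?mulN1r ?mul1r //; exact: allwN.
Qed.

Definition pad (I : finType) k (X : I -> C) (i : 'I_k) : C :=
  oapp (fun t : 'I_#|I| => X (enum_val t)) 1 (insub (val i)).

Lemma pad_allw (I : finType) k (X : I -> C) i :
  (forall t, allw (X t)) -> allw (pad X (k:=k) i).
Proof. by move=> h; rewrite /pad; case: insub => [t|] /=; [apply: h| apply: allw1]. Qed.

Lemma pad_prod (I : finType) k (X : I -> C) : (#|I| <= k)%N ->
  \prod_(i < k) pad X i = \prod_(t : I) X t.
Proof.
move=> hk.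
pose F (m : nat) := oapp (fun t : 'I_#|I| => X (enum_val t)) 1 (insub m).
have -> : \prod_(i < k) pad X i = \prod_(i < k) F i by [].
rewrite (bigID (fun i : 'I_k => (i < #|I|)%N)) /=.
rewrite [X in _ * X]big1 ?mulr1; last first.
  by move=> i; rewrite -leqNgt /F => h; rewrite insubN // -leqNgt.
rewrite -(big_ord_widen _ F hk) (big_enum_val X) /=.
apply: eq_bigr => i _; by rewrite /F valK.
Qed.

Variables (S : comNzRingType) (phi : {rmorphism C -> S}) (B : Type) (e : B -> S)
  (badd : B -> B -> B) (b0 : B) (deg : B -> nat).
Hypotheses (e0 : e b0 = 1) (eD : forall u v, e (badd u v) = e u * e v)
  (deg0 : deg b0 = 0%N) (degD : forall u v, deg (badd u v) = (deg u + deg v)%N).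

Lemma big_unit1 (F : unit -> S) : \sum_(j : unit) F j = F tt.
Proof. by rewrite (bigD1 tt) //= big_pred0 ?addr0 // => -[]. Qed.

Definition G (k l : nat) (D : int) (f : S) : Prop :=
  exists J : finType, (#|J| <= l)%N /\
  exists (s : J -> bool) (X : J -> 'I_k -> C) (M : J -> B),
   [/\ forall j i, allw (X j i), forall j, ((deg (M j))%:Z <= D)
     & f = \sum_(j : J) phi ((-1) ^+ s j * \prod_i X j i) * e (M j)].

Lemma G0 k l D : G k l D 0.
Proof.
exists void; rewrite card_void; split => //.
exists (fun=> false), (fun j : void => match j with end), (fun j : void => match j with end).
by split; [case|case|rewrite big_pred0 //; case].
Qed.

Lemma G_le k l D k' l' D' f : (k <= k')%N -> (l <= l')%N -> D <= D' ->
  G k l D f -> G k' l' D' f.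
Proof.
move=> hk hl hD [J [hJ [s [X [M [hX hM ->]]]]]].
exists J; split; first exact: leq_trans hJ hl.
exists s, (fun j => pad (X j) (k:=k')), M; split.
- by move=> j i; apply: pad_allw.
- by move=> j; apply: le_trans (hM j) hD.
apply: eq_bigr => j _; rewrite pad_prod ?card_ord //.
Qed.

Lemma G_add k l1 l2 D f g : G k l1 D f -> G k l2 D g -> G k (l1 + l2) D (f + g).
Proof.
move=> [J1 [h1 [s1 [X1 [M1 [hX1 hM1 ->]]]]]] [J2 [h2 [s2 [X2 [M2 [hX2 hM2 ->]]]]]].
exists (J1 + J2)%type; split; first by rewrite card_sum leq_add.
exists (fun j => match j with inl j => s1 j | inr j => s2 j end),
  (fun j => match j with inl j => X1 j | inr j => X2 j end),
  (fun j => match j with inl j => M1 j | inr j => M2 j end).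
split.
- by case=> j i; [apply: hX1|apply: hX2].
- by case=> j; [apply: hM1|apply: hM2].
by rewrite big_sumType.
Qed.

Lemma G_sgn k l D f (c : bool) : G k l D f -> G k l D ((-1) ^+ c * f).
Proof.
move=> [J [h [s [X [M [hX hM ->]]]]]].
exists J; split => //; exists (fun j => c (+) s j), X, M; split => //.
rewrite mulr_sumr; apply: eq_bigr => j _.
by rewrite signr_addb !rmorphM !rmorph_sign !mulrA.
Qed.

Lemma G_opp k l D f : G k l D f -> G k l D (- f).
Proof. by move=> h; rewrite -mulN1r; apply: (G_sgn true h). Qed.

Lemma G_cond k l D f (c : bool) : (c -> G k l D f) ->
  G k (if c then l else 0) D (if c then f else 0).
Proof. by case: c => h; [apply: h| apply: G0]. Qed.

Lemma G_one k D : 0 <= D -> G k 1 D 1.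
Proof.
move=> hD; exists unit; rewrite card_unit; split => //.
exists (fun=> false), (fun _ _ => 1), (fun=> b0); split => //.
- by move=> *; apply: allw1.
- by move=> _; rewrite deg0.
by rewrite big_unit1 /= big1 // expr0 mulr1 rmorph1 e0 mulr1.
Qed.

Lemma G_C k D c : (0 < k)%N -> 0 <= D -> allw c -> G k 1 D (phi c).
Proof.
move=> hk hD hc; exists unit; rewrite card_unit; split => //.
exists (fun=> false), (fun _ i => if (val i == 0)%N then c else 1), (fun=> b0); split => //.
- by move=> _ i; case: ifP => _ //; apply: allw1.
- by move=> _; rewrite deg0.
rewrite big_unit1 /= e0 mulr1 expr0 mul1r.
rewrite (bigD1 (Ordinal hk)) //= big1 ?mulr1 //.
by move=> i; case: ifP => // /eqP h /eqP []; apply: val_inj.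
Qed.

Lemma G_e k D u : (deg u)%:Z <= D -> G k 1 D (e u).
Proof.
move=> hD; exists unit; rewrite card_unit; split => //.
exists (fun=> false), (fun _ _ => 1), (fun=> u); split => //.
- by move=> *; apply: allw1.
by rewrite big_unit1 /= big1 // expr0 mulr1 rmorph1 mul1r.
Qed.


Lemma G_mul k1 l1 D1 k2 l2 D2 f g : G k1 l1 D1 f -> G k2 l2 D2 g ->
  G (k1 + k2) (l1 * l2) (D1 + D2) (f * g).
Proof.
move=> [J1 [h1 [s1 [X1 [M1 [hX1 hM1 ->]]]]]] [J2 [h2 [s2 [X2 [M2 [hX2 hM2 ->]]]]]].
exists (J1 * J2)%type; split; first by rewrite card_prod leq_mul.
pose Y (j : J1 * J2) (t : 'I_k1 + 'I_k2) :=
  match t with inl i => X1 j.1 i | inr i => X2 j.2 i end.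
exists (fun j => s1 j.1 (+) s2 j.2), (fun j => pad (Y j) (k:=k1 + k2)),
  (fun j => badd (M1 j.1) (M2 j.2)).
split.
- by move=> j i; apply: pad_allw => -[t|t]; [apply: hX1|apply: hX2].
- by move=> j; rewrite degD PoszD lerD.
rewrite big_distrlr pair_big /=; apply: eq_bigr => -[j1 j2] _ /=.
rewrite pad_prod ?card_sum ?card_ord // big_sumType /= eD signr_addb.
rewrite !rmorphM. set u1 := phi _. set u2 := phi _. set u3 := phi _. set u4 := phi _.
set v1 := e _. set v2 := e _. ring.
Qed.

Lemma G_sum (I : finType) k l D (F : I -> S) :
  (forall i, G k l D (F i)) -> G k (#|I| * l) D (\sum_(i : I) F i).
Proof.
move=> h.
have : forall r : seq I, G k (size r * l) D (\sum_(i <- r) F i).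
  elim=> [|x r IH]; first by rewrite big_nil; apply: G0.
  by rewrite big_cons mulSn; apply: G_add.
move=> /(_ (index_enum I)).
by rewrite cardT enumT [index_enum I]unlock.
Qed.

Lemma G_prod (I : finType) (K L : I -> nat) (Dv : I -> int) (F : I -> S) :
  (forall i, G (K i) (L i) (Dv i) (F i)) ->
  G (\sum_i K i) (\prod_i L i) (\sum_i Dv i) (\prod_(i : I) F i).
Proof.
move=> h.
suff : forall r : seq I, G (\sum_(i <- r) K i) (\prod_(i <- r) L i)
   (\sum_(i <- r) Dv i) (\prod_(i <- r) F i) by move=> /(_ (index_enum I)).
elim=> [|x r IH]; first by rewrite !big_nil; apply: G_one.
by rewrite !big_cons; apply: G_mul.
Qed.

Lemma G_coef k l D f (kappa : S -> C) (P : B -> bool) :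
  (forall x y, kappa (x + y) = kappa x + kappa y) -> kappa 0 = 0 ->
  (forall c u, kappa (phi c * e u) = c * (P u)%:R) ->
  (0 < k)%N -> G k l D f -> inT a b k l (kappa f).
Proof.
move=> kD k0 kT hk [J [hJ [s [X [M [hX hM ->]]]]]].
rewrite (big_morph kappa kD k0).
exists #|J|; split => //.
pose i0 := Ordinal hk.
exists (fun t i => if i == i0 then (-1) ^+ s (enum_val t) * (P (M (enum_val t)))%:R
                       * X (enum_val t) i else X (enum_val t) i).
split.
- by move=> t i; case: ifP => _; [apply: allw_sgn|]; apply: hX.
rewrite (big_enum_val (fun j => kappa _)) /=.
apply: eq_bigr => t _; rewrite kT (bigD1 i0) //= [in RHS](bigD1 i0) //= ?eqxx.
rewrite [X in _ = _ * X](eq_bigr (fun i => X (enum_val t) i)); last first.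
  by move=> i /negbTE ->.
ring.
Qed.

End GS.


Lemma cnt (i j k l d1 d2 Ld : nat) : (0 < Ld)%N -> (k < d1)%N -> (l < d2)%N ->
 ((if (i == k) && (j == l) then Ld else 0) + ((i.+1 == k) && (l == j)) + ((i == d1.-1) && (l == j))
  + ((k == i) && (j.+1 == l)) + ((k == i) && (j == d2.-1)) <= Ld * 2 ^ ((i == d1.-1) + (j == d2.-1)))%N.
Proof.
move=> hL hk hl.
have e1 : ((if (i == k) && (j == l) then Ld else 0) + ((i.+1 == k) && (l == j)) + ((k == i) && (j.+1 == l)) <= Ld)%N.
  case: (i =P k) => [<-|hik] /=; first by rewrite eqxx /= (eqn_leq i.+1) ltnn /=; case: (j =P l) => [<-|] /=;
    rewrite ?(eqn_leq j.+1) ?ltnn /=; lia.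
  have -> : (k == i) = false by apply/eqP => h; apply: hik; rewrite h.
  by rewrite /= addn0; case: (_ && _) => /=; lia.
have f2 : ((i == d1.-1) && (l == j) <= (i == d1.-1))%N by case: (i == d1.-1) => /=; rewrite ?leq_b1.
have f4 : ((k == i) && (j == d2.-1) <= (j == d2.-1))%N by case: (k == i) => /=; rewrite ?leqnn ?leq_b1.
have g : forall x y : bool, (Ld + x + y <= Ld * 2 ^ (x + y))%N.
  by case; case => /=; rewrite ?expn1 ?expnS ?expn0; lia.
move: (g (i == d1.-1) (j == d2.-1)); lia.
Qed.

Section E.
Variables (R : realType) (d1 d2 : nat) (a : 'I_d1 -> R[i]) (b : 'I_d2 -> R[i]).
Local Notation C := R[i].
Local Notation T := ('I_d1 * 'I_d2)%type.

Definition c1 (t u : T) := (t.1.+1 == u.1 :> nat) && (u.2 == t.2 :> nat).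
Definition c2 (t u : T) := (t.1 == d1.-1 :> nat) && (u.2 == t.2 :> nat).
Definition c3 (t u : T) := (u.1 == t.1 :> nat) && (t.2.+1 == u.2 :> nat).
Definition c4 (t u : T) := (u.1 == t.1 :> nat) && (t.2 == d2.-1 :> nat).
Definition diag (t u : T) := (t.1 == u.1 :> nat) && (t.2 == u.2 :> nat).
Definition Kt (t : T) := ((t.1 == d1.-1 :> nat) + (t.2 == d2.-1 :> nat))%N.

Definition Nent (t u : T) : C :=
  (if c1 t u then 1 else 0) - (if c2 t u then a u.1 else 0)
  - (if c3 t u then 1 else 0) + (if c4 t u then b u.2 else 0).

Lemma phiN (S : nzRingType) (phi : {rmorphism C -> S}) t u : phi (Nent t u) =
  (if c1 t u then 1 else 0) - (if c2 t u then phi (a u.1) else 0)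
  - (if c3 t u then 1 else 0) + (if c4 t u then phi (b u.2) else 0).
Proof.
rewrite /Nent !(rmorphD, rmorphB, rmorphN).
by case: (c1 t u); case: (c2 t u); case: (c3 t u); case: (c4 t u); rewrite ?rmorph0 ?rmorph1.
Qed.

Lemma allw_a j : allowed a b (a j). Proof. by right; right; right; left; exists j; left. Qed.
Lemma allw_b j : allowed a b (b j). Proof. by right; right; right; right; exists j; left. Qed.

Variables (S : comNzRingType) (phi : {rmorphism C -> S}) (B : Type) (e : B -> S)
  (badd : B -> B -> B) (b0 : B) (deg : B -> nat).
Hypotheses (e0 : e b0 = 1) (deg0 : deg b0 = 0%N).

Local Notation G := (G a b phi e deg).

Lemma G_entry (t u : T) (dg : S) Ld D : (0 < Ld)%N ->
  (diag t u -> G (Kt t) Ld D dg) ->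
  ([|| c1 t u, c2 t u, c3 t u | c4 t u] -> 0 <= D) ->
  G (Kt t) (Ld * 2 ^ Kt t) D ((if diag t u then dg else 0) - phi (Nent t u)).
Proof.
move=> hL hd hD; rewrite phiN.
have -> : forall (X A1 A2 A3 A4 : S), X - (A1 - A2 - A3 + A4) = X + - A1 + A2 + A3 + - A4.
  by move=> *; ring.
apply: (G_le (leqnn _) _ (lexx D)
   (G_add (G_add (G_add (G_add (G_cond hd) (G_opp (G_cond _))) (G_cond _)) (G_cond _))
     (G_opp (G_cond _)))).
- by apply: (cnt t.1 t.2 hL (ltn_ord u.1) (ltn_ord u.2)).
- by move=> h; apply: (G_one a b phi e0 deg0); apply: hD; rewrite h.
- move=> h; apply: (G_C phi e0 deg0) => //; first by move: h; rewrite /c2 /Kt; case: (_ == _).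
  + by apply: hD; rewrite h orbT.
  + exact: allw_a.
- by move=> h; apply: (G_one a b phi e0 deg0); apply: hD; rewrite h !orbT.
- move=> h; apply: (G_C phi e0 deg0) => //; first by move: h; rewrite /c4 /Kt andbC; case: (_ == _) => //=; rewrite addn1.
  + by apply: hD; rewrite h !orbT.
  + exact: allw_b.
Qed.

End E.


Section Main.
Variables (R : realType) (d1 d2 : nat) (a : 'I_d1 -> R[i]) (b : 'I_d2 -> R[i]).
Hypotheses (h1 : (0 < d1)%N) (h2 : (0 < d2)%N).
Local Notation C := R[i].
Local Notation T := ('I_d1 * 'I_d2)%type.
Local Notation n := (d1 * d2)%N.

Definition idx (r : 'I_n) : T := enum_val (cast_ord (esym (mxvec_cast d1 d2)) r).
Definition ridx (t : T) : 'I_n := cast_ord (mxvec_cast d1 d2) (enum_rank t).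
Lemma idxK : cancel idx ridx.
Proof. by move=> r; rewrite /idx /ridx enum_valK cast_ordKV. Qed.
Lemma ridxK : cancel ridx idx.
Proof. by move=> t; rewrite /idx /ridx cast_ordK enum_rankK. Qed.

Global Opaque idx ridx.

Lemma sum_idx (V : nmodType) (F : T -> V) : \sum_(r < n) F (idx r) = \sum_(t : T) F t.
Proof.
rewrite (reindex idx) //; exists ridx => x _; [exact: idxK | exact: ridxK].
Qed.

Lemma eq_diag r c : (r == c) = diag (idx r) (idx c).
Proof.
rewrite -(inj_eq (can_inj idxK)); case: (idx r) => i j; case: (idx c) => k l.
by rewrite xpair_eqE.
Qed.

Lemma sum_last d : (0 < d)%N -> (\sum_(i < d) ((i : nat) == d.-1))%N = 1%N.
Proof.
move=> hd; rewrite (bigD1 (Ordinal (etrans (ltn_predL d) hd))) //= eqxx big1 // => i hi.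
by case: eqP => // h; move: hi; rewrite -val_eqE /= h eqxx.
Qed.

Lemma sumK : (\sum_(r < n) Kt (idx r))%N = (d1 + d2)%N.
Proof.
rewrite (sum_idx (fun t => Kt t)) (eq_bigr (fun p : T => Kt (p.1, p.2))); last by case.
rewrite -(pair_bigA _ (fun i j => Kt (i, j))) /= /Kt /=.
rewrite (eq_bigr (fun i : 'I_d1 => d2 * ((i : nat) == d1.-1) + 1)%N); last first.
  move=> i _; rewrite big_split /= sum_nat_const card_ord sum_last // mulnC.
rewrite big_split /= -big_distrr /= sum_last // sum_nat_const card_ord; lia.
Qed.

Lemma prodK : (\prod_(r < n) 2 ^ Kt (idx r))%N = (2 ^ (d1 + d2))%N.
Proof. by rewrite -expn_sum sumK. Qed.


Definition Nmx : 'M[C]_n := \matrix_(r, c) Nent a b (idx r) (idx c).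
Definition rr := char_poly Nmx.

Lemma char_entry r c : char_poly_mx Nmx r c =
  (if diag (idx r) (idx c) then 'X else 0) - polyC (Nent a b (idx r) (idx c)).
Proof. by rewrite /char_poly_mx !mxE eq_diag; case: diag. Qed.

Local Notation Gp := (G a b (@polyC C) (fun m : nat => 'X^m) (fun=> 0%N)).

Lemma rr_G : Gp (d1 + d2) (2 ^ (d1 + d2) * n`!) 0 rr.
Proof.
rewrite /rr /char_poly /determinant.
have hE : forall r c, Gp (Kt (idx r)) (1 * 2 ^ Kt (idx r)) 0 (char_poly_mx Nmx r c).
  move=> r c; rewrite char_entry; apply: (G_entry (b0 := 0%N)) => //.
  by move=> _; apply: (@G_e _ _ _ a b _ _ _ _ _ _ _ 1%N).
have hP := fun s : 'S_n => G_sgn (odd_perm s)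
   (@G_prod _ _ _ a b _ polyC _ (fun m : nat => 'X^m) addn 0%N (fun=> 0%N)
      (expr0 _) (fun u v => exprD _ u v) erefl (fun u v => erefl) _ _ _ _ _ (fun r => hE r (s r))).
apply: G_le (G_sum hP).
- by rewrite sumK.
- by rewrite card_Sn mulnC leq_mul // (eq_bigr _ (fun r _ => mul1n _)) prodK.
- by rewrite big1.
Qed.

Lemma rr_coef m : inT a b (d1 + d2) (2 ^ (d1 + d2) * n`!) rr`_m.
Proof.
apply: (G_coef (kappa := fun p : {poly C} => p`_m) (P := fun u : nat => m == u)) rr_G.
- by move=> x y; rewrite coefD.
- by rewrite coef0.
- by move=> c u; rewrite coefCM coefXn.
- by rewrite addn_gt0 h1.
Qed.

End Main.


Section Mp.
Variables (R : realType) (d1 d2 : nat) (a : 'I_d1 -> R[i]) (b : 'I_d2 -> R[i]).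
Hypotheses (h1 : (0 < d1)%N) (h2 : (0 < d2)%N).
Local Notation C := R[i].
Local Notation T := ('I_d1 * 'I_d2)%type.
Local Notation n := (d1 * d2)%N.
Local Notation S := {mpoly C[2]}.
Local Notation idx := (@idx d1 d2).
Local Notation ridx := (@ridx d1 d2).

Lemma cfu : commr_rmorph (mpolyC 2 (R:=C)) ('X_0 - 'X_1). Proof. by move=> c; apply: mulrC. Qed.
Definition Pm : 'M[S]_n := map_mx (horner_morph cfu) (char_poly_mx (Nmx a b)).

Lemma P_entry r c : Pm r c =
  (if diag (idx r) (idx c) then 'X_0 - 'X_1 else 0) - mpolyC 2 (Nent a b (idx r) (idx c)).
Proof.
rewrite /Pm mxE char_entry rmorphB fun_if rmorph0.
congr (_ - _); [case: diag => //; exact: horner_morphX | exact: horner_morphC].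
Qed.

Definition ph (r : 'I_n) := ((idx r).1 + (idx r).2)%N.
Definition e00 : 'I_n := ridx (Ordinal h1, Ordinal h2).
Lemma ph_e00 : ph e00 = 0%N. Proof. by rewrite /ph /e00 (ridxK (Ordinal h1, Ordinal h2)). Qed.
Definition Drc (r c : 'I_n) : int := (1 + ph r)%:Z - (ph c + (c == e00))%:Z.

Definition repl (M : 'M[S]_n) (V : 'cV[S]_n) : 'M[S]_n :=
  \matrix_(r, c) if c == e00 then V r 0 else M r c.

Lemma col_repl M V : col' e00 (repl M V) = col' e00 M.
Proof.
apply/matrixP => i k; rewrite !mxE.
by rewrite eq_sym (negbTE (neq_lift _ _)).
Qed.

Lemma repl_det M V : \det (repl M V) = \sum_c (\adj M) e00 c * V c 0.
Proof.
rewrite (expand_det_col _ e00); apply: eq_bigr => r _.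
rewrite [repl M V r e00]mxE (eqxx e00) [\adj M e00 r]mxE [RHS]mulrC.
by rewrite /cofactor col_repl.
Qed.

Local Notation Gm := (G a b (mpolyC 2 (R:=C)) (fun m : 'X_{1..2} => 'X_[m]) mdeg).

Lemma GmX (k : nat) (j : 'I_2) (D : int) : 1 <= D -> Gm k 1 D 'X_j.
Proof. by move=> hD; apply: (@G_e _ _ _ a b _ _ _ _ _ _ _ U_(j)%MM); rewrite mdeg1. Qed.

Lemma GmXn (k : nat) (j : 'I_2) (D : int) m : (m%:Z <= D) -> Gm k 1 D ('X_j ^+ m).
Proof. by move=> hD; rewrite mpolyXn; apply: (@G_e _ _ _ a b _ _ _ _ _ _ _ (U_(j) *+ m)%MM); rewrite mdegMn mdeg1 mul1n. Qed.

Lemma P_G r c : c != e00 ->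
  Gm (Kt (idx r)) (2 * 2 ^ Kt (idx r)) (Drc r c) (Pm r c).
Proof.
move=> hc; rewrite P_entry.
apply: (G_entry (b0 := 0%MM)) => //.
- exact: mpolyX0.
- exact: mdeg0.
- move=> hd; have -> : Drc r c = 1.
    move: hd; rewrite /Drc /ph /diag (negbTE hc) => /andP[/eqP -> /eqP ->]; lia.
  rewrite -[2%N]/(1 + 1)%N; apply: G_add; first by apply: GmX.
  by apply: G_opp; apply: GmX.
- rewrite /Drc /ph (negbTE hc) /c1 /c2 /c3 /c4.
  have := ltn_ord (idx c).1; have := ltn_ord (idx c).2.
  move=> hl hk; case/or4P => /andP[/eqP h /eqP h']; lia.
Qed.


Lemma sumD (s : 'S_n) : \sum_r Drc r (s r) = (n.-1)%:Z.
Proof.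
rewrite /Drc sumrB.
have -> : \sum_r ((ph (s r) + (s r == e00))%N)%:Z = \sum_r ((ph r + (r == e00))%N)%:Z.
  by rewrite [RHS](reindex_inj (@perm_inj _ s)).
rewrite -!(big_morph Posz PoszD (erefl (Posz 0))) !big_split /=.
have hs : (\sum_(r < n) (r == e00))%N = 1%N.
  by rewrite (bigD1 e00) //= eqxx big1 // => r /negbTE ->.
rewrite sum_nat_const card_ord hs.
have : (0 < n)%N by rewrite muln_gt0 h1.
lia.
Qed.

Lemma repl_G (V : 'cV[S]_n) : (forall r, Gm (Kt (idx r)) 1 (Drc r e00) (V r 0)) ->
  Gm (d1 + d2) (n`! * (2 ^ n * 2 ^ (d1 + d2))) (n.-1)%:Z (\det (repl Pm V)).
Proof.
move=> hV.
have hE : forall r c, Gm (Kt (idx r)) (2 * 2 ^ Kt (idx r)) (Drc r c) (repl Pm V r c).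
  move=> r c; rewrite mxE; case: eqP => [->|/eqP hc]; last exact: P_G.
  by apply: G_le (hV r) => //; rewrite muln_gt0 expn_gt0.
have hD : forall s : 'S_n, \sum_r Drc r (s r) <= (n.-1)%:Z by move=> s; rewrite sumD.
have hP := fun s : 'S_n => G_le (leqnn _) (leqnn _) (hD s) (G_sgn (odd_perm s)
   (@G_prod _ _ _ a b _ (mpolyC 2 (R:=C)) _ (fun m : 'X_{1..2} => 'X_[m]) (@mnm_add 2) 0%MM mdeg
      (@mpolyX0 _ _) (@mpolyXD _ _) (@mdeg0 _) (@mdegD _) _ _ _ _ _ (fun r => hE r (s r)))).
rewrite /determinant; apply: G_le (G_sum hP) => //.
- by rewrite sumK.
- by rewrite card_Sn big_split /= prod_nat_const card_ord prodK.
Qed.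

Lemma msize_G k l N f : Gm k l (N%:Z) f -> (msize f <= N.+1)%N.
Proof.
move=> [J [_ [s [X [M [_ hM ->]]]]]].
apply: (leq_trans (msize_sum _ _ _)); apply/bigmax_leqP => j _.
rewrite mul_mpolyC; apply: (leq_trans (msizeZ_le _ _)); rewrite msizeX ltnS.
by have := hM j; rewrite lez_nat.
Qed.

Lemma coef_G k l D f m : (0 < k)%N -> Gm k l D f -> inT a b k l (f@_m).
Proof.
move=> hk hG.
apply: (G_coef (kappa := fun p : S => p@_m) (P := fun u => u == m)) hG => //.
- by move=> x y; rewrite mcoeffD.
- by rewrite mcoeff0.
- by move=> c u; rewrite mcoeffCM mcoeffX.
Qed.

End Mp.


Section Sums.
Variable (V : nzRingType).
Lemma H1 d (j : 'I_d) (G : 'I_d -> V) :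
  \sum_(l : 'I_d) (if (l : nat) == j then G l else 0) = G j.
Proof.
rewrite (bigD1 j) //= eqxx big1 ?addr0 // => l hl.
by rewrite ifN //; move: hl; rewrite -val_eqE.
Qed.
Lemma H1' d (j : 'I_d) (G : 'I_d -> V) :
  \sum_(l : 'I_d) (if (j : nat) == l then G l else 0) = G j.
Proof. by rewrite -(H1 j G); apply: eq_bigr => l _; rewrite eq_sym. Qed.
Lemma H2 d (m : nat) (G : nat -> V) :
  \sum_(k : 'I_d) (if m == k then G k else 0) = if (m < d)%N then G m else 0.
Proof.
case: ltnP => hm.
  by rewrite (H1' (Ordinal hm) (fun k : 'I_d => G k)).
by rewrite big1 // => k _; rewrite ifN //; apply/eqP => h; move: (ltn_ord k); rewrite -h; lia.
Qed.
Lemma sum_if I (r : seq I) (A : bool) (G : I -> V) :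
  \sum_(l <- r) (if A then G l else 0) = if A then \sum_(l <- r) G l else 0.
Proof. by case: A => //; rewrite big1. Qed.
Lemma ifand (A B : bool) (X : V) :
  (if A && B then X else 0) = if A then (if B then X else 0) else 0.
Proof. by case: A. Qed.
End Sums.

Section Key.
Variables (R : realType) (d1 d2 : nat) (a : 'I_d1 -> R[i]) (b : 'I_d2 -> R[i]).
Hypotheses (h1 : (0 < d1)%N) (h2 : (0 < d2)%N).
Local Notation C := R[i].
Local Notation T := ('I_d1 * 'I_d2)%type.
Local Notation n := (d1 * d2)%N.
Local Notation S := {mpoly C[2]}.
Local Notation idx := (@idx d1 d2).
Local Notation x := ('X_0 : S).
Local Notation y := ('X_1 : S).
Local Notation CC := (mpolyC 2 (R:=C)).

Definition mon (u : T) : S := x ^+ u.1 * y ^+ u.2.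

Lemma pX_eq : peval2 (pp a) x = x ^+ d1 + \sum_(k < d1) CC (a k) * x ^+ k.
Proof.
rewrite /peval2 /pp rmorphD rmorph_sum /= map_polyXn hornerD horner_sum hornerXn.
by congr (_ + _); apply: eq_bigr => k _; rewrite map_polyZ hornerZ map_polyXn hornerXn.
Qed.
Lemma qY_eq : peval2 (qq b) y = y ^+ d2 + \sum_(l < d2) CC (b l) * y ^+ l.
Proof.
rewrite /peval2 /qq rmorphD rmorph_sum /= map_polyXn hornerD horner_sum hornerXn.
by congr (_ + _); apply: eq_bigr => k _; rewrite map_polyZ hornerZ map_polyXn hornerXn.
Qed.

Lemma sum_pair (F : T -> S) : \sum_(u : T) F u = \sum_(k < d1) \sum_(l < d2) F (k, l).
Proof. by rewrite pair_bigA; apply: eq_bigr => -[]. Qed.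

Lemma A1_eq (t : T) : \sum_(u : T) (if c1 t u then mon u else 0) =
  if (t.1.+1 < d1)%N then x ^+ t.1.+1 * y ^+ t.2 else 0.
Proof.
rewrite sum_pair /c1 /=.
rewrite (eq_bigr (fun k : 'I_d1 => if t.1.+1 == k then x ^+ k * y ^+ t.2 else 0)).
  exact: (H2 _ _ (fun k => x ^+ k * y ^+ t.2)).
move=> k _; rewrite (eq_bigr (fun l : 'I_d2 =>
   if t.1.+1 == k then (if (l : nat) == t.2 then mon (k, l) else 0) else 0)).
  by rewrite sum_if (H1 t.2 (fun l => mon (k, l))).
by move=> l _; rewrite ifand.
Qed.

Lemma A2_eq (t : T) : \sum_(u : T) (if c2 t u then CC (a u.1) * mon u else 0) =
  if (t.1 == d1.-1 :> nat) then (\sum_(k < d1) CC (a k) * x ^+ k) * y ^+ t.2 else 0.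
Proof.
rewrite sum_pair /c2 /=.
rewrite (eq_bigr (fun k : 'I_d1 => if (t.1 == d1.-1 :> nat) then CC (a k) * x ^+ k * y ^+ t.2 else 0)).
  by rewrite sum_if mulr_suml.
move=> k _; rewrite (eq_bigr (fun l : 'I_d2 =>
   if (t.1 == d1.-1 :> nat) then (if (l : nat) == t.2 then CC (a k) * mon (k, l) else 0) else 0)).
  by rewrite sum_if (H1 t.2 (fun l => CC (a k) * mon (k, l))) /mon mulrA.
by move=> l _; rewrite ifand.
Qed.

Lemma A3_eq (t : T) : \sum_(u : T) (if c3 t u then mon u else 0) =
  if (t.2.+1 < d2)%N then x ^+ t.1 * y ^+ t.2.+1 else 0.
Proof.
rewrite sum_pair /c3 /=.
rewrite (eq_bigr (fun k : 'I_d1 => if (k : nat) == t.1 then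
     (if (t.2.+1 < d2)%N then x ^+ k * y ^+ t.2.+1 else 0) else 0)).
  exact: (H1 t.1 (fun k : 'I_d1 => if (t.2.+1 < d2)%N then x ^+ k * y ^+ t.2.+1 else 0)).
move=> k _; rewrite (eq_bigr (fun l : 'I_d2 =>
   if (k : nat) == t.1 then (if t.2.+1 == l then x ^+ k * y ^+ l else 0) else 0)).
  by rewrite sum_if (H2 _ _ (fun m => x ^+ k * y ^+ m)).
by move=> l _; rewrite ifand.
Qed.

Lemma A4_eq (t : T) : \sum_(u : T) (if c4 t u then CC (b u.2) * mon u else 0) =
  if (t.2 == d2.-1 :> nat) then x ^+ t.1 * \sum_(l < d2) CC (b l) * y ^+ l else 0.
Proof.
rewrite sum_pair /c4 /=.
rewrite (eq_bigr (fun k : 'I_d1 => if (t.2 == d2.-1 :> nat) then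
    (if (k : nat) == t.1 then \sum_(l < d2) CC (b l) * mon (k, l) else 0) else 0)).
  rewrite sum_if (H1 t.1 (fun k => \sum_(l < d2) CC (b l) * mon (k, l))) mulr_sumr.
  by congr (if _ then _ else _); apply: eq_bigr => l _; rewrite /mon /=; ring.
move=> k _; rewrite (eq_bigr (fun l : 'I_d2 =>
   if (t.2 == d2.-1 :> nat) then (if (k : nat) == t.1 then CC (b l) * mon (k, l) else 0) else 0)).
  by rewrite sum_if; congr (if _ then _ else _); rewrite sum_if.
by move=> l _; rewrite andbC ifand.
Qed.

Definition vv : 'cV[S]_n := \col_r mon (idx r).
Definition UU : 'cV[S]_n := \col_r (if ((idx r).1 == d1.-1 :> nat) then y ^+ (idx r).2 else 0).
Definition WW : 'cV[S]_n := \col_r (if ((idx r).2 == d2.-1 :> nat) then x ^+ (idx r).1 else 0).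

Lemma diag_eq (t u : T) : diag t u = (t == u).
Proof. by case: t => i j; case: u => k l; rewrite xpair_eqE. Qed.

Lemma key : Pm a b *m vv = peval2 (pp a) x *: UU - peval2 (qq b) y *: WW.
Proof.
apply/matrixP => r z; rewrite !mxE.
set t := idx r.
pose F (u : T) := ((if diag t u then x - y else 0) - CC (Nent a b t u)) * mon u.
rewrite (eq_bigr (fun c => F (idx c))); last by move=> c _; rewrite P_entry mxE.
rewrite (sum_idx F).
have hF : forall u, F u = (if diag t u then (x - y) * mon u else 0)
   - (if c1 t u then mon u else 0) + (if c2 t u then CC (a u.1) * mon u else 0)
   + (if c3 t u then mon u else 0) - (if c4 t u then CC (b u.2) * mon u else 0).
  move=> u; rewrite /F phiN.
  by case: (diag t u); case: (c1 t u); case: (c2 t u); case: (c3 t u); case: (c4 t u); ring.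
rewrite (eq_bigr _ (fun u _ => hF u)) !big_split /= !sumrN.
rewrite A1_eq A2_eq A3_eq A4_eq pX_eq qY_eq.
rewrite (bigD1 t) //= diag_eq eqxx big1 ?addr0; last first.
  by move=> u hu; rewrite diag_eq eq_sym (negbTE hu).
rewrite /mon.
set sa := \sum_(k < d1) _. set sb := \sum_(l < d2) _.
clear hF F; case: t => i j /=.
have hi := ltn_ord i; have hj := ltn_ord j.
have [hi1|hi1] := ltnP i.+1 d1.
  have -> : (i == d1.-1 :> nat) = false by apply/eqP; lia.
  have [hj1|hj1] := ltnP j.+1 d2.
    have -> : (j == d2.-1 :> nat) = false by apply/eqP; lia.
    by rewrite !exprS; ring.
  have -> : (j == d2.-1 :> nat) = true by apply/eqP; lia.
  have -> : y ^+ d2 = y ^+ j.+1 by congr (_ ^+ _); lia.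
  by rewrite !exprS; ring.
have -> : (i == d1.-1 :> nat) = true by apply/eqP; lia.
have -> : x ^+ d1 = x ^+ i.+1 by congr (_ ^+ _); lia.
have [hj1|hj1] := ltnP j.+1 d2.
  have -> : (j == d2.-1 :> nat) = false by apply/eqP; lia.
  by rewrite !exprS; ring.
have -> : (j == d2.-1 :> nat) = true by apply/eqP; lia.
have -> : y ^+ d2 = y ^+ j.+1 by congr (_ ^+ _); lia.
by rewrite !exprS; ring.
Qed.

Lemma key_entry c : (peval2 (pp a) x *: UU - peval2 (qq b) y *: WW) c 0 =
  peval2 (pp a) x * UU c 0 - peval2 (qq b) y * WW c 0.
Proof. by rewrite !mxE. Qed.

End Key.


Lemma mulmx_entry (S : pzRingType) n (A : 'M[S]_n) (B : 'cV[S]_n) i :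
  (A *m B) i 0 = \sum_c A i c * B c 0.
Proof. by rewrite mxE. Qed.
Lemma scal_entry (S : pzRingType) m n (A : 'M[S]_(m, n)) c i j : (c *: A) i j = c * A i j.
Proof. by rewrite mxE. Qed.
Lemma sub_entry (S : pzRingType) m n (A B : 'M[S]_(m, n)) i j : (A - B) i j = A i j - B i j.
Proof. by rewrite !mxE. Qed.


End Helpers.
Import Helpers.
Unset Implicit Arguments. Set Strict Implicit.
Import Order.TTheory.

Theorem lemma18 (R : realType) (d1 d2 : nat)
  (a : 'I_d1 -> R[i]) (b : 'I_d2 -> R[i]) :
  (1 <= d1)%N -> (1 <= d2)%N ->
  exists (r : {poly R[i]}) (R1 R2 : {mpoly R[i][2]}),
    [/\ peval2 r ('X_0 - 'X_1) =
          R1 * peval2 (pp a) 'X_0 + R2 * peval2 (qq b) 'X_1,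
        size r = (d1 * d2).+1 /\ lead_coef r = 1,
        (msize R1 <= d1 * d2)%N /\ (msize R2 <= d1 * d2)%N,
        forall n : nat, inT a b (d1 + d2) (2 ^ (d1 + d2) * (d1 * d2)`!) r`_n
      & forall m : 'X_{1..2},
          inT a b ((d1.+1) * (d2.+1)) (4 ^ ((d1.+1) * (d2.+1)) * ((d1.+1) * (d2.+1))`!) (R1@_m)
          /\ inT a b ((d1.+1) * (d2.+1)) (4 ^ ((d1.+1) * (d2.+1)) * ((d1.+1) * (d2.+1))`!) (R2@_m)].
Proof.
move=> h1 h2.
pose P := Pm a b.
pose U := UU R d1 d2. pose W := WW R d1 d2.
have hU : forall r, G a b (mpolyC 2 (R:=R[i])) (fun m : 'X_{1..2} => 'X_[m]) mdeg
    (Kt (idx r)) 1 (Drc h1 h2 r (e00 h1 h2)) (U r 0).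
  move=> r; rewrite mxE.
  have hx : ((idx r).2 : nat)%:Z <= Drc h1 h2 r (e00 h1 h2) by rewrite /Drc ph_e00 eqxx /ph; lia.
  apply: G_le (G_cond (fun _ => GmXn a b (Kt (idx r)) 1 hx)) => //.
  by case: ifP.
have hW : forall r, G a b (mpolyC 2 (R:=R[i])) (fun m : 'X_{1..2} => 'X_[m]) mdeg
    (Kt (idx r)) 1 (Drc h1 h2 r (e00 h1 h2)) (W r 0).
  move=> r; rewrite mxE.
  have hx : ((idx r).1 : nat)%:Z <= Drc h1 h2 r (e00 h1 h2) by rewrite /Drc ph_e00 eqxx /ph; lia.
  apply: G_le (G_cond (fun _ => GmXn a b (Kt (idx r)) 0 hx)) => //.
  by case: ifP.
have GU := repl_G hU. have GW := G_opp (repl_G hW).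
exists (rr a b), (\det (repl h1 h2 P U)), (- \det (repl h1 h2 P W)).
have hn : (0 < d1 * d2)%N by rewrite muln_gt0 h1.
split.
- have e1 : peval2 (rr a b) ('X_0 - 'X_1) = \det P by rewrite /P /Pm det_map_mx.
  have e2 : vv R d1 d2 (e00 h1 h2) 0 = 1.
    by rewrite /vv mxE /e00 (ridxK (Ordinal h1, Ordinal h2)) /mon /= !expr0 mulr1.
  have e3 := congr1 (fun M : 'cV_(d1 * d2) => M (e00 h1 h2) 0) (mulmxA (\adj P) P (vv R d1 d2)).
  move: e3; rewrite /= mul_adj_mx mul_scalar_mx (key a b h1 h2) => e3.
  rewrite (mulmx_entry (\adj P)) scal_entry e2 mulr1 in e3.
  rewrite !repl_det e1 -e3 /U /W.
  rewrite mulNr !mulr_suml -sumrN -big_split /=; apply: eq_bigr => c _.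
  rewrite key_entry.
  ring.
- by split; [rewrite size_char_poly | apply/monicP; apply: char_poly_monic].
- split.
    by have := msize_G GU; rewrite (prednK hn).
  by have := msize_G GW; rewrite (prednK hn).
- by move=> m; apply: rr_coef.
have hb : forall f, G a b (mpolyC 2 (R:=R[i])) (fun m : 'X_{1..2} => 'X_[m]) mdeg
    (d1 + d2) ((d1 * d2)`! * (2 ^ (d1 * d2) * 2 ^ (d1 + d2))) (d1 * d2).-1 f ->
    forall m, inT a b ((d1.+1) * (d2.+1)) (4 ^ ((d1.+1) * (d2.+1)) * ((d1.+1) * (d2.+1))`!) (f@_m).
  move=> f hf m.
  have hd : ((d1.+1) * (d2.+1) = (d1 * d2 + d1 + d2).+1)%N by rewrite mulSn mulnS; lia.
  apply: (coef_G _ _ (G_le _ _ (lexx _) hf)).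
  - by rewrite hd.
  - by rewrite hd; lia.
  rewrite mulnC leq_mul //; last by apply: leq_fact; rewrite hd; lia.
  rewrite -expnD (_ : 4 = 2 ^ 2)%N // -expnM leq_exp2l // hd; lia.
by move=> m; split; apply: hb.
Qed.
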